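(* For $n\ge1$ let $c(n)$ be the number of nonempty words $\omega$ such that $\omega\omega\omega$ is a suffix of $\mathbb{T}[1,n]$ and $\omega\omega\omega$ is not a factor of $\mathbb{T}[1,n-1]$. Then $c(n)=0$ for $n\leq57$; for $n\geq58$, let $m$ be such that $t_{m-1}+2t_{m-4}\leq n<t_{m}+2t_{m-3}$; then $m\geq7$ and $c(n)=1$ if and only if $n\leq t_{m-1}+k_{m+1}-2$.
   Context: The Tribonacci sequence $\mathbb{T}=x_1x_2x_3\cdots$ is the fixed point (infinite word starting with $a$) of the substitution $\sigma(a)=ab$, $\sigma(b)=ac$, $\sigma(c)=a$ over $\{a,b,c\}$. For $n\ge1$, $\mathbb{T}[1,n]=x_1\cdots x_n$ is its prefix of length $n$. The Tribonacci numbers are $t_m=|\sigma^m(a)|$ for $m\ge0$, with $t_{-2}=0$, $t_{-1}=1$; thus $t_0=1,t_1=2,t_2=4$ and $t_m=t_{m-1}+t_{m-2}+t_{m-3}$. The kernel numbers are $k_0=0$, $k_1=k_2=1$, $k_m=k_{m-1}+k_{m-2}+k_{m-3}-1$ for $m\ge3$. *)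

(* Defs.v *)
From HB Require Import structures.
From mathcomp Require Import all_boot.
Set Implicit Arguments. Unset Strict Implicit. Unset Printing Implicit Defensive.

Inductive letter := La | Lb | Lc.

Definition letter_eqb (x y : letter) : bool :=
  match x, y with La, La | Lb, Lb | Lc, Lc => true | _, _ => false end.

Lemma letter_eqP : Equality.axiom letter_eqb.
Proof. by case; case; constructor. Qed.

HB.instance Definition _ := hasDecEq.Build letter letter_eqP.

Definition sigma_letter (x : letter) : seq letter :=
  match x with La => [:: La; Lb] | Lb => [:: La; Lc] | Lc => [:: La] end.

Definition sigma (w : seq letter) : seq letter := flatten (map sigma_letter w).

Definition sigma_pow (k : nat) : seq letter := iter k sigma [:: La].

(* T[1,n]: the prefix of length n of the fixed point T = lim sigma^k(a).
   Since |sigma^n(a)| = t_n >= n and each sigma^k(a) is a prefix of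
   sigma^(k+1)(a), this is the length-n prefix of T. *)
Definition Tpref (n : nat) : seq letter := take n (sigma_pow n).

(* A computationally efficient equal version (truncating at each step;
   valid since sigma is non-erasing, take n (sigma w) = take n (sigma (take n w))). *)
Definition Tpref_fast (n : nat) : seq letter :=
  iter n (fun w => take n (sigma w)) [:: La].

(* Shifted Tribonacci numbers: tri j = t_(j-2), so tri 0 = t_(-2) = 0,
   tri 1 = t_(-1) = 1, tri 2 = t_0 = 1, tri 3 = t_1 = 2, tri 4 = t_2 = 4. *)
Fixpoint tri (j : nat) : nat :=
  match j with
  | 0 => 0
  | S j1 => match j1 with
            | 0 => 1
            | S j2 => match j2 with
                      | 0 => 1
                      | S j3 => tri j1 + tri j2 + tri j3
                      end
            end
  end.


Fixpoint kern (m : nat) : nat :=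
  match m with
  | 0 => 0
  | S m1 => match m1 with
            | 0 => 1
            | S m2 => match m2 with
                      | 0 => 1
                      | S m3 => kern m1 + kern m2 + kern m3 - 1
                      end
            end
  end.

Definition factors (s : seq letter) : seq (seq letter) :=
  [seq take l (drop i s) | i <- iota 0 (size s).+1, l <- iota 0 (size s).+1].

Definition new_cube (n : nat) (w : seq letter) : bool :=
  [&& 0 < size w, suffix (w ++ w ++ w) (Tpref n) & ~~ infix (w ++ w ++ w) (Tpref n.-1)].

(* c(n): the number of such words omega.  Every such omega is a factor of
   T[1,n], so it suffices to count among the (distinct) factors of T[1,n]. *)
Definition c (n : nat) : nat := count (new_cube n) (undup (factors (Tpref n))).

Example tri_check : [seq tri j | j <- iota 0 9] = [:: 0; 1; 1; 2; 4; 7; 13; 24; 44]. Proof. by []. Qed.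
Example kern_check : [seq kern j | j <- iota 0 7] = [:: 0; 1; 1; 1; 2; 3; 5]. Proof. by []. Qed.
Example T_check : Tpref 8 = [:: La; Lb; La; Lc; La; Lb; La; La]. Proof. by []. Qed.

(* Main.v *)
Require Import Defs.
From mathcomp Require Import all_boot.
From mathcomp Require Import zify.
From Stdlib Require Import Classical.
Set Implicit Arguments. Unset Strict Implicit. Unset Printing Implicit Defensive.

Lemma sigma_cat x y : sigma (x ++ y) = sigma x ++ sigma y.
Proof. by rewrite /sigma map_cat flatten_cat. Qed.

Lemma sigma_cons x y : sigma (x :: y) = sigma_letter x ++ sigma y.
Proof. by []. Qed.

Lemma iter_sigma_cat k x y : iter k sigma (x ++ y) = iter k sigma x ++ iter k sigma y.
Proof. by elim: k => //= k ->; rewrite sigma_cat. Qed.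

Lemma sigma_powS k : sigma_pow k.+1 = sigma (sigma_pow k).
Proof. by []. Qed.

Lemma sigma_pow_rec k : sigma_pow k.+3 = sigma_pow k.+2 ++ sigma_pow k.+1 ++ sigma_pow k.
Proof.
rewrite /sigma_pow iterSr.
change (sigma [:: La]) with ([:: La] ++ [:: Lb]).
rewrite iter_sigma_cat; congr (_ ++ _).
rewrite iterSr.
change (sigma [:: Lb]) with ([:: La] ++ [:: Lc]).
rewrite iter_sigma_cat; congr (_ ++ _).
by rewrite iterSr.
Qed.

Lemma size_sigma_pow k : size (sigma_pow k) = tri k.+2.
Proof.
have H : forall k, size (sigma_pow k) = tri k.+2 /\ size (sigma_pow k.+1) = tri k.+3
   /\ size (sigma_pow k.+2) = tri k.+4.
  elim=> [|j [h1 [h2 h3]]]; first by [].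
  split; first by []. split; first by [].
  by rewrite sigma_pow_rec !size_cat h1 h2 h3 /=; lia.
by case: (H k).
Qed.

Lemma triS k : tri k.+3 = tri k.+2 + tri k.+1 + tri k.
Proof. by []. Qed.

Lemma tri_le k : tri k <= tri k.+1.
Proof. by case: k => [|[|[|k]]] //; rewrite [tri k.+4]triS; lia. Qed.

Lemma tri_pos k : 0 < tri k.+1.
Proof. elim: k => [|k IH] //; have := tri_le k.+1; lia. Qed.

Lemma tri_ge k : k.+1 <= tri k.+2.
Proof.
elim: k => [|k IH] //; rewrite triS; have := tri_pos k; lia.
Qed.

Lemma sigma_pow_prefix1 j : exists y, sigma_pow j.+1 = sigma_pow j ++ y.
Proof.
elim: j => [|j [y Hy]]; first by exists [:: Lb].
by exists (sigma y); rewrite sigma_powS {1}Hy sigma_cat.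
Qed.

Lemma sigma_pow_prefix k k' : k <= k' -> exists x, sigma_pow k' = sigma_pow k ++ x.
Proof.
move=> /subnK <-; elim: (k' - k) => [|d [x Hx]]; first by exists [::]; rewrite cats0.
have [y Hy] := sigma_pow_prefix1 (d + k).
by exists (x ++ y); rewrite addSn Hy Hx catA.
Qed.

Definition T (i : nat) : letter := nth La (sigma_pow i.+1) i.

Lemma nth_sigma_pow k i : i < size (sigma_pow k) -> nth La (sigma_pow k) i = T i.
Proof.
move=> Hi; rewrite /T.
case: (leqP k i.+1) => Hk.
  by have [x ->] := sigma_pow_prefix Hk; rewrite nth_cat Hi.
have [x ->] := sigma_pow_prefix (ltnW Hk).
by rewrite nth_cat size_sigma_pow (leq_trans _ (tri_ge _)).
Qed.

Definition seg (x len : nat) : seq letter := map T (iota x len).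

Lemma size_seg x len : size (seg x len) = len.
Proof. by rewrite size_map size_iota. Qed.

Lemma nth_seg x len i : i < len -> nth La (seg x len) i = T (x + i).
Proof. by move=> Hi; rewrite (nth_map 0) ?size_iota // nth_iota. Qed.

Lemma seg_add x a b : seg x (a + b) = seg x a ++ seg (x + a) b.
Proof. by rewrite /seg iotaD map_cat. Qed.

Lemma seg1 x : seg x 1 = [:: T x].
Proof. by []. Qed.

Lemma take_sigma_pow n K : n <= size (sigma_pow K) -> take n (sigma_pow K) = seg 0 n.
Proof.
move=> Hn; apply: (@eq_from_nth _ La); first by rewrite size_takel // size_seg.
move=> i; rewrite size_takel // => Hin.
by rewrite nth_take // nth_seg // nth_sigma_pow //; lia.
Qed.

Lemma Tpref_seg n : Tpref n = seg 0 n.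
Proof. by rewrite /Tpref take_sigma_pow // size_sigma_pow; have := tri_ge n; lia. Qed.

Definition pos (j : nat) : nat := size (sigma (seg 0 j)).

Lemma sigma_seg0 j : sigma (seg 0 j) = seg 0 (pos j).
Proof.
have Hj : j <= size (sigma_pow j) by rewrite size_sigma_pow; have := tri_ge j; lia.
have E := cat_take_drop j (sigma_pow j).
have E2 : sigma_pow j.+1 = sigma (take j (sigma_pow j)) ++ sigma (drop j (sigma_pow j)).
  by rewrite sigma_powS -sigma_cat E.
rewrite -(take_sigma_pow Hj) /pos -(take_sigma_pow Hj).
rewrite -[LHS](take_size_cat (sigma (drop j (sigma_pow j))) (erefl _)) -E2.
rewrite take_sigma_pow //.
by rewrite E2 size_cat; lia.
Qed.

Lemma sigma1 x : sigma [:: x] = sigma_letter x.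
Proof. by rewrite /sigma /= cats0. Qed.

Lemma seg0S j : seg 0 j.+1 = seg 0 j ++ [:: T j].
Proof. by rewrite -addn1 seg_add. Qed.

Lemma seg0_posS j : seg 0 (pos j.+1) = seg 0 (pos j) ++ sigma_letter (T j).
Proof. by rewrite -!sigma_seg0 seg0S sigma_cat sigma1. Qed.

Lemma pos0 : pos 0 = 0.
Proof. by []. Qed.

Lemma posS j : pos j.+1 = pos j + size (sigma_letter (T j)).
Proof. by rewrite -[pos j.+1](size_seg 0) seg0_posS size_cat size_seg. Qed.

Lemma T_block j i : i < size (sigma_letter (T j)) ->
  T (pos j + i) = nth La (sigma_letter (T j)) i.
Proof.
move=> Hi.
have := congr1 (fun s => nth La s (pos j + i)) (seg0_posS j) => /=.
rewrite nth_seg; last by rewrite posS; lia.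
by rewrite nth_cat size_seg ltnNge leq_addr /= addKn.
Qed.

Definition g (x : letter) : letter := match x with La => Lb | Lb => Lc | Lc => La end.

Lemma g_inj x y : g x = g y -> x = y.
Proof. by case: x; case: y. Qed.

Lemma size_sl x : size (sigma_letter x) = if x == Lc then 1 else 2.
Proof. by case: x. Qed.

Lemma T_pos j : T (pos j) = La.
Proof. by rewrite -[pos j]addn0 T_block //; case: (T j). Qed.

Lemma posS' j : pos j.+1 = pos j + (if T j == Lc then 1 else 2).
Proof. by rewrite posS size_sl. Qed.

Lemma T_pos1 j : T (pos j).+1 = g (T j).
Proof.
case E: (T j).
- by rewrite -addn1 T_block ?E.
- by rewrite -addn1 T_block ?E.
- by have := T_pos j.+1; rewrite posS' E addn1.
Qed.

Lemma T_pos_last j : T (pos j.+1).-1 = g (T j).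
Proof.
rewrite posS'; case E: (T j) => /=.
- by rewrite addn2 /= -addn1 T_block ?E.
- by rewrite addn2 /= -addn1 T_block ?E.
- by rewrite addn1 /= T_pos.
Qed.

Lemma pos_lt j : pos j < pos j.+1.
Proof. rewrite posS'; case: (T j == Lc); lia. Qed.

Lemma pos_ltn j j' : j < j' -> pos j < pos j'.
Proof.
move=> /subnK <-; elim: (j' - j.+1) => [|d IH]; first by rewrite add0n pos_lt.
by rewrite addSn; apply: (ltn_trans IH); apply: pos_lt.
Qed.

Lemma pos_mono j j' : j <= j' -> pos j <= pos j'.
Proof. by rewrite leq_eqVlt => /orP [/eqP -> //|/pos_ltn /ltnW]. Qed.

Lemma pos_ltn_inv j j' : pos j < pos j' -> j < j'.
Proof. by move=> H; rewrite ltnNge; apply/negP => /pos_mono; lia. Qed.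

Lemma pos_le_inv j j' : pos j <= pos j' -> j <= j'.
Proof. by move=> H; rewrite leqNgt; apply/negP => /pos_ltn; lia. Qed.

Lemma pos_ge j : j <= pos j.
Proof. elim: j => [|j IH] //; have := pos_lt j; lia. Qed.

Lemma pos_cover i : exists j, pos j <= i < pos j.+1.
Proof.
elim: i => [|i [j Hj]]; first by exists 0; rewrite pos0 /=; have := pos_lt 0.
case: (ltnP i.+1 (pos j.+1)) => H; first by exists j; lia.
by exists j.+1; have := pos_lt j.+1; lia.
Qed.

Lemma T_nonA i : T i <> La -> [/\ 0 < i, T i.-1 = La & T i.+1 = La].
Proof.
move=> H; have [j Hj] := pos_cover i.
have [E|E] : i = pos j \/ i = (pos j).+1 /\ T j != Lc.
  move: Hj; rewrite posS'; case: (T j == Lc) => /=; lia.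
- by rewrite E T_pos in H.
case: E => -> E; split => //; first by rewrite T_pos.
by have := T_pos j.+1; rewrite posS' (negbTE E) addn2.
Qed.

Lemma T_a_pos i : T i = La -> exists j, i = pos j.
Proof.
move=> H; have [j Hj] := pos_cover i.
have [E|E] : i = pos j \/ i = (pos j).+1 /\ T j != Lc.
  move: Hj; rewrite posS'; case: (T j == Lc) => /=; lia.
- by exists j.
case: E => E1 E2; move: H; rewrite E1 T_pos1.
by case: (T j) E2.
Qed.

Lemma no_aaa i : T i = La -> T i.+1 = La -> T i.+2 = La -> False.
Proof.
move=> H0 H1 H2; have [j Ej] := T_a_pos H0; subst i.
move: H1; rewrite T_pos1 => Hc.
have Hc' : T j = Lc by case: (T j) Hc.
have Ep : pos j.+1 = (pos j).+1 by rewrite posS' Hc' addn1.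
move: H2; rewrite -Ep T_pos1 => Hc2.
have Hc2' : T j.+1 = Lc by case: (T j.+1) Hc2.
have [_ _ H3] := T_nonA (i := j) (ltac:(by rewrite Hc')).
by rewrite H3 in Hc2'.
Qed.

Lemma pos_gap2 j : pos j + 3 <= pos j.+2.
Proof.
rewrite !posS'; case E: (T j == Lc) => /=; last by case: (T j.+1 == Lc); lia.
have [_ _ H] := T_nonA (i := j) (ltac:(by move/eqP: E ->)).
by rewrite H /=; lia.
Qed.

Lemma pos_gap' j d : pos j + d + 2 < pos (j + d + 2).
Proof.
elim: d => [|d IH]; first by rewrite !addn0; have := pos_gap2 j; rewrite -(addn2 j); lia.
have E : j + d.+1 + 2 = (j + d + 2).+1 by lia.
rewrite E; have := pos_lt (j + d + 2); lia.
Qed.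

Lemma pos_gap j q : 2 <= q -> pos j + q < pos (j + q).
Proof.
move=> /subnK <-; have := pos_gap' j (q - 2).
by rewrite -!addnA.
Qed.

Lemma seg_cat_inv (s a b : seq letter) : s ++ a = s ++ b -> a = b.
Proof. by move=> /(congr1 (drop (size s))); rewrite !drop_size_cat. Qed.

Lemma sigma_seg u len : sigma (seg u len) = seg (pos u) (pos (u + len) - pos u).
Proof.
apply: (@seg_cat_inv (seg 0 (pos u))).
have E1 := seg_add 0 (pos u) (pos (u + len) - pos u).
rewrite add0n subnKC in E1; last by apply: pos_mono; lia.
have E2 := seg_add 0 u len; rewrite add0n in E2.
by rewrite -E1 -!sigma_seg0 E2 sigma_cat.
Qed.

Definition per p s e := forall i, s <= i -> i + p < e -> T i = T (i + p).

Definition maxrun p s e :=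
  [/\ per p s e, (0 < s -> T s.-1 <> T (s.-1 + p)) & T (e - p) <> T e].

Lemma shift p s e u q : per p s e -> s = pos u -> pos (u + q) = s + p ->
  forall d, pos (u + d + q) < e -> pos (u + d + q) = pos (u + d) + p.
Proof.
move=> Hper Hs Hq; elim=> [|d IH] H; first by rewrite addn0 Hq Hs.
have Hlt : pos (u + d + q) < pos (u + d.+1 + q) by apply: pos_ltn; lia.
have IH' := IH (ltn_trans Hlt H).
have HT : T (u + d) = T (u + d + q).
  apply: g_inj; rewrite -!T_pos1 IH' -addSn; apply: Hper.
    by rewrite Hs; have := pos_mono (leq_addr d u); lia.
  lia.
rewrite addnS addSn !posS IH' HT; lia.
Qed.

Lemma shiftT p s e u q : per p s e -> s = pos u -> pos (u + q) = s + p ->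
  forall d, (pos (u + d + q)).+1 < e -> T (u + d) = T (u + d + q).
Proof.
move=> Hper Hs Hq d H.
have E := shift Hper Hs Hq (ltnW H).
apply: g_inj; rewrite -!T_pos1 E -addSn; apply: Hper.
  by rewrite Hs; have := pos_mono (leq_addr d u); lia.
lia.
Qed.

Lemma step p s e : 2 <= p -> maxrun p s e -> s + 3 * p <= e + 1 ->
  exists u w q, [/\ s = pos u, e = (pos w).+1, 0 < q < p & maxrun q u w] /\
    [/\ u + 3 * q <= w + 1, pos (u + q) = pos u + p
   & seg s (e - s) = sigma (seg u (w - u)) ++ [:: La]].
Proof.
move=> Hp [Hper Hl Hr] Hlen.
have Ts : T s = La.
  case/boolP: (T s == La) => [/eqP //|/eqP Hn].
  have [Hs0 Hsm _] := T_nonA Hn.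
  have Hsp : T s = T (s + p) by apply: Hper => //; lia.
  have [_ Hspm _] := T_nonA (i := s + p) (ltac:(by rewrite -Hsp)).
  exfalso; apply: Hl => //; rewrite Hsm.
  have -> : s.-1 + p = (s + p).-1 by lia.
  by rewrite Hspm.
have [u Hu] := T_a_pos Ts.
have Tsp : T (s + p) = La by rewrite -(Hper s) //; lia.
have [u' Hu'] := T_a_pos Tsp.
have Huu' : u < u' by apply: pos_ltn_inv; rewrite -Hu -Hu'; lia.
set q := u' - u.
have Hq : pos (u + q) = s + p by rewrite /q subnKC ?Hu' //; lia.
have Te : T e.-1 = La.
  case/boolP: (T e.-1 == La) => [/eqP //|/eqP Hn].
  have [He0 _ Hep] := T_nonA Hn.
  have Hx : T (e.-1 - p) = T (e.-1 - p + p) by apply: Hper; lia.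
  rewrite (_ : e.-1 - p + p = e.-1) in Hx; last by lia.
  have [_ _ Hx2] := T_nonA (i := e.-1 - p) (ltac:(by rewrite Hx)).
  exfalso; apply: Hr.
  have -> : e - p = (e.-1 - p).+1 by lia.
  have -> : e = (e.-1).+1 by lia.
  by rewrite Hx2 Hep.
have [w Hw] := T_a_pos Te.
have He : e = (pos w).+1 by lia.
have Hsh := shift Hper Hu Hq.
have HshT := shiftT Hper Hu Hq.
have Hwq : u + q <= w by apply: pos_le_inv; rewrite Hq -Hw; lia.
have Hposw : pos w = pos (w - q) + p.
  have := Hsh (w - q - u); rewrite (_ : u + (w - q - u) + q = w); last by lia.
  by rewrite (_ : u + (w - q - u) = w - q); [move=> ->|]; lia.
have Hpu0 : pos u = s by [].
exists u, w, q; split; split => //.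
- apply/andP; split; first by rewrite /q; lia.
  case: (ltnP q 2) => Hq2; first by lia.
  have := pos_gap u Hq2; lia.
- split.
  + move=> j Hj Hjq.
    have := HshT (j - u); rewrite (_ : u + (j - u) = j); last by lia.
    move=> -> //; have := pos_ltn Hjq; lia.
  + move=> Hu0 Heq; apply: Hl.
      by have := pos_ge u; lia.
    have E1 : s.-1 = (pos (u.-1).+1).-1 by rewrite prednK // Hu.
    have E2 : s.-1 + p = (pos (u.-1 + q).+1).-1 by rewrite -addSn prednK // Hq; have := pos_ge u; lia.
    by rewrite E2 E1 !T_pos_last Heq.
  + move=> Heq; apply: Hr.
    rewrite He (_ : (pos w).+1 - p = (pos (w - q)).+1); last by lia.
    by rewrite !T_pos1 Heq.
- rewrite leqNgt; apply/negP => Hbad.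
  case: (leqP (u + q) (w - q)) => Hc.
  + have Hp2 : pos (w - q) = pos (w - q - q) + p.
      have := Hsh (w - q - q - u); rewrite (_ : u + (w - q - q - u) + q = w - q); last by lia.
      rewrite (_ : u + (w - q - q - u) = w - q - q); last by lia.
      by apply; apply: (@leq_ltn_trans (pos w)); [apply: pos_mono|]; lia.
    have Hg := pos_gap2 (w - q - q).
    have Hm : pos (w - q - q).+2 <= pos (u + q) by apply: pos_mono; lia.
    lia.
  + have Hm : pos (w - q) < pos (u + q) by apply: pos_ltn; lia.
    lia.
- by rewrite Hq Hu.
- rewrite He Hu (_ : (pos w).+1 - pos u = (pos w - pos u) + 1); last first.
    have Huw : u <= w by lia.
    by have := pos_mono Huw; lia.
  rewrite seg_add sigma_seg subnKC; last by lia.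
  have Huw : u <= w by lia.
  by rewrite (subnKC Huw) seg1 T_pos.
Qed.

Lemma not_ult_per p : 0 < p -> forall s, exists i, s <= i /\ T i <> T (i + p).
Proof.
elim/ltn_ind: p => p IH Hp s.
case: (ltnP p 2) => Hp2.
  have -> : p = 1 by lia.
  exists (pos (pos s)); split; first by have := pos_ge s; have := pos_ge (pos s); lia.
  by rewrite addn1 T_pos1 T_pos T_pos.
apply: NNPP => H.
have Hper : forall i, s <= i -> T i = T (i + p).
  move=> i Hi; case: (T i =P T (i + p)) => // Hn.
  by exfalso; apply: H; exists i.
have Tsp : T (pos s + p) = La by rewrite -Hper ?T_pos //; have := pos_ge s; lia.
have [u' Hu'] := T_a_pos Tsp.
have Huu' : s < u' by apply: pos_ltn_inv; rewrite -Hu'; lia.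
set q := u' - s.
have Hq : pos (s + q) = pos s + p by rewrite /q subnKC ?Hu' //; lia.
have Hq0 : 0 < q < p.
  apply/andP; split; first by rewrite /q; lia.
  case: (ltnP q 2) => Hq2; first by lia.
  have := pos_gap s Hq2; lia.
case/andP: Hq0 => Hq0 Hqp.
have [i [Hi Hne]] := IH q Hqp Hq0 s.
apply: Hne.
have Hper' : forall e, per p (pos s) e.
  by move=> e j Hj _; apply: Hper; have := pos_ge s; lia.
have := shiftT (Hper' (pos (s + (i - s) + q)).+2) (erefl _) Hq (d := i - s).
by rewrite (_ : s + (i - s) = i); [apply|]; lia.
Qed.

Lemma left_ext p e s0 : per p s0 e ->
  exists s, [/\ s <= s0, per p s e & (0 < s -> T s.-1 <> T (s.-1 + p))].
Proof.
elim: s0 => [|s0 IH] Hper; first by exists 0; split.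
case: (T s0 =P T (s0 + p)) => Heq.
  have Hper0 : per p s0 e.
    move=> i Hi Hie; case: (ltnP s0 i) => Hc; first by apply: Hper.
    by have -> : i = s0 by lia.
  by have [s [H1 H2 H3]] := IH Hper0; exists s; split => //; lia.
by exists s0.+1; split.
Qed.

Lemma extend p s0 n : 0 < p -> per p s0 n -> s0 + p <= n ->
  exists s e, [/\ s <= s0, n <= e & maxrun p s e].
Proof.
move=> Hp Hper Hn.
have Hex : exists i, (s0 <= i) && (T i != T (i + p)).
  have [i [H1 H2]] := not_ult_per Hp s0; exists i; rewrite H1 /=; exact/eqP.
case: (ex_minnP Hex) => i0 /andP [Hi0 /eqP Hne] Hmin.
have Hper2 : per p s0 (i0 + p).
  move=> i Hi Hie; case: (T i =P T (i + p)) => // Hn'.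
  have Hb : T i != T (i + p) by apply/eqP.
  have := Hmin i; rewrite Hi Hb => /(_ isT); lia.
have Hne2 : n <= i0 + p.
  rewrite leqNgt; apply/negP => Hc; apply: Hne; apply: Hper => //; lia.
have [s [H1 H2 H3]] := left_ext Hper2.
exists s, (i0 + p); split => //; split => //.
by rewrite addnK.
Qed.

Definition t k := tri k.+2.
Fixpoint G k := match k with 0 => [::] | k'.+1 => sigma_pow k' ++ G k' end.
Definition F k := sigma_pow k ++ sigma_pow k ++ G k.
Definition P k := tri k.+4 + tri k.+3.
Fixpoint S k := match k with 0 => 0 | k'.+1 => S k' + t k' end.

Lemma G_S k : sigma (G k) ++ [:: La] = G k.+1.
Proof.
elim: k => [|k IH] //=.
by rewrite sigma_cat -catA IH.
Qed.

Lemma F_S k : F k.+1 = sigma (F k) ++ [:: La].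
Proof. by rewrite /F !sigma_cat -!catA G_S. Qed.

Lemma size_G k : size (G k) = S k.
Proof. by elim: k => [|k IH] //=; rewrite size_cat IH size_sigma_pow /t; lia. Qed.

Lemma size_F k : size (F k) = 2 * t k + S k.
Proof. by rewrite /F !size_cat size_G size_sigma_pow /t; lia. Qed.

Lemma take_F k : take (t k) (F k) = sigma_pow k.
Proof. by rewrite /F /t -size_sigma_pow take_size_cat. Qed.

Lemma take_seg x a b : a <= b -> take a (seg x b) = seg x a.
Proof. by move=> /subnKC <-; rewrite seg_add take_size_cat ?size_seg. Qed.

Lemma pos_P k : pos (P k) = P k.+1.
Proof.
have E : seg 0 (P k) = sigma_pow k.+2 ++ sigma_pow k.+1.
  rewrite -(take_sigma_pow (K := k.+3)); last by rewrite size_sigma_pow /P (triS k.+2); lia.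
  rewrite (sigma_pow_rec k) catA take_size_cat //.
  by rewrite size_cat !size_sigma_pow /P addnC.
by rewrite /pos E sigma_cat size_cat -!sigma_powS !size_sigma_pow /P addnC.
Qed.

Lemma aa_early s : s < 6 -> T s = La -> T s.+1 = La -> False.
Proof. by case: s => [|[|[|[|[|[|s]]]]]] //; vm_compute. Qed.

Lemma classify p : 0 < p -> forall s e, maxrun p s e -> s + 3 * p <= e + 1 ->
  exists k, [/\ p = t k, seg s (e - s) = F k & P k <= s].
Proof.
elim/ltn_ind: p => p IH Hp s e Hmr Hlen.
case: (ltnP p 2) => Hp2.
  have E1 : p = 1 by lia.
  subst p; case: Hmr => Hper _ Hr.
  have Hs1 : T s = T (s + 1) by apply: Hper; lia.
  have Ts : T s = La.
    case: (T s =P La) => // Hn; have [_ _ H] := T_nonA Hn.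
    by rewrite addn1 H in Hs1.
  have Ts1 : T s.+1 = La by rewrite -addn1 -Hs1.
  have He : e = s + 2.
    case: (ltnP e (s + 3)) => Hc; first by lia.
    have := Hper s.+1 (leqnSn s); rewrite addn1 => H.
    by exfalso; apply: (no_aaa Ts Ts1); rewrite -H //; lia.
  exists 0; split => //.
    by rewrite He addKn /seg /= Ts Ts1.
  rewrite /P /=; case: (ltnP s 6) => // Hc.
  by exfalso; apply: (aa_early Hc Ts Ts1).
have [u [w [q [[Hu Hw Hq Hmr' ] [Hlen' Hpq Hseg]]]]] := step Hp2 Hmr Hlen.
case/andP: Hq => Hq0 Hqp.
have [k [Hqk Hsk Hpk]] := IH q Hqp Hq0 u w Hmr' Hlen'.
exists k.+1; split.
- have : size (sigma (seg u q)) = pos (u + q) - pos u by rewrite sigma_seg size_seg.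
  rewrite Hpq -(take_seg u (_ : q <= w - u)); last by lia.
  rewrite Hsk Hqk take_F -sigma_powS size_sigma_pow /t; lia.
- by rewrite Hseg Hsk F_S.
- by rewrite Hu -pos_P; apply: pos_mono.
Qed.

Lemma occ_F k : seg (P k) (size (F k)) = F k.
Proof.
elim: k => [|k IH]; first by vm_compute.
have E := sigma_seg (P k) (size (F k)).
rewrite IH pos_P in E.
have Hm : P k.+1 <= pos (P k + size (F k)) by rewrite -pos_P; apply: pos_mono; lia.
rewrite F_S E size_cat size_seg /= -addn1 seg_add seg1.
by rewrite !addn1 (subnKC Hm) T_pos.
Qed.

Lemma G_prefix k : exists Y, sigma_pow k ++ G k = G k ++ Y /\ size Y = t k.
Proof.
elim: k => [|k [Y [HY HsY]]]; first by exists [:: La].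
have : 0 < size Y by rewrite HsY /t; apply: tri_pos.
case: Y HY HsY => [|y Y0] // HY HsY _.
have Hs : size (sigma (y :: Y0)) = t k.+1.
  have H : size (sigma (sigma_pow k ++ G k)) = size (sigma (G k ++ y :: Y0)) by rewrite HY.
  rewrite (sigma_cat (sigma_pow k)) (sigma_cat (G k)) size_cat size_cat in H.
  rewrite -sigma_powS size_sigma_pow in H.
  rewrite /t; lia.
exists (behead (sigma_letter y) ++ sigma Y0 ++ [:: La]); split.
  rewrite -G_S sigma_powS catA -sigma_cat HY sigma_cat sigma_cons -!catA.
  by clear HY Hs HsY; case: y.
move: Hs; rewrite sigma_cons !size_cat.
by clear HY HsY; case: y => /=; lia.
Qed.

Definition wper p (w : seq letter) :=
  forall i, i + p < size w -> nth La w i = nth La w (i + p).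

Lemma wper_F k : wper (t k) (F k).
Proof.
have [Y [HY HsY]] := G_prefix k.
have Hx : size (sigma_pow k) = t k by rewrite size_sigma_pow.
move=> i; rewrite /F !size_cat Hx => Hi.
rewrite [in RHS]nth_cat Hx (_ : i + t k < t k = false); last by lia.
rewrite (_ : i + t k - t k = i); last by lia.
case: (ltnP i (t k)) => H1.
  by rewrite nth_cat Hx H1 nth_cat Hx H1.
rewrite nth_cat Hx (_ : i < t k = false); last by lia.
have E : nth La (sigma_pow k ++ G k) (i - t k) = nth La (G k ++ Y) (i - t k) by rewrite HY.
have H2 : (i < t k) = false by rewrite ltnNge H1.
have H3 : (i - t k < size (G k)) by lia.
rewrite E. rewrite [in RHS]nth_cat. rewrite Hx H2 nth_cat H3. reflexivity.
Qed.

Lemma per_wper p x L : per p x (x + L) <-> wper p (seg x L).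
Proof.
split.
  move=> H i; rewrite size_seg => Hi.
  rewrite (nth_seg x Hi) (nth_seg x (_ : i < L)); last by lia.
  rewrite addnA; apply: H; lia.
move=> H i Hi Hie.
have Hi1 : i - x + p < size (seg x L) by rewrite size_seg; lia.
have := H (i - x) Hi1.
rewrite (nth_seg x (_ : i - x < L)); last by lia.
rewrite (nth_seg x (_ : i - x + p < L)); last by lia.
have -> : x + (i - x) = i by lia.
by have -> : x + (i - x + p) = i + p by lia.
Qed.

Lemma per_sub p s e s' e' : per p s e -> s <= s' -> e' <= e -> per p s' e'.
Proof. by move=> H H1 H2 i Hi Hie; apply: H; lia. Qed.



Lemma seg_sub x y L L' : y <= x -> x + L' <= y + L ->
  seg x L' = take L' (drop (x - y) (seg y L)).
Proof.
move=> H1 H2; apply: (@eq_from_nth letter La).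
  rewrite size_takel; first by rewrite size_seg.
  by rewrite size_drop size_seg; lia.
move=> i; rewrite size_seg => Hi.
rewrite nth_take; last by [].
rewrite nth_drop.
rewrite (nth_seg x Hi) (nth_seg y (_ : x - y + i < L)); last by lia.
by have -> : y + (x - y + i) = x + i by lia.
Qed.

Lemma seg_eq_per y L d : seg y L = seg (y + d) L -> per d y (y + L + d).
Proof.
move=> H i Hi Hie.
have E : nth La (seg y L) (i - y) = nth La (seg (y + d) L) (i - y) by rewrite H.
rewrite (nth_seg y (_ : i - y < L)) in E; last by lia.
rewrite (nth_seg (y + d) (_ : i - y < L)) in E; last by lia.
have E1 : y + (i - y) = i by lia.
have E2 : y + d + (i - y) = i + d by lia.
by rewrite E1 E2 in E.
Qed.

Lemma S_lt k : S k < 2 * t k.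
Proof.
elim: k => [|k IH] //=; rewrite /t in IH *.
case: k IH => [|k] IH //.
have := triS k.+1; have := triS k; have := tri_le k.+1; have := tri_le k; lia.
Qed.

Lemma t_lt k : t k < t k.+1.
Proof. by rewrite /t (triS k); have := tri_pos k; lia. Qed.

Lemma t_ltn k k' : k < k' -> t k < t k'.
Proof.
move=> /subnK <-; elim: (k' - k.+1) => [|d IH]; first by rewrite add0n t_lt.
by rewrite addSn; apply: (ltn_trans IH); apply: t_lt.
Qed.

Lemma t_inj k k' : t k = t k' -> k = k'.
Proof.
move=> H; case: (ltngtP k k') => // Hc.
- by have := t_ltn Hc; lia.
- by have := t_ltn Hc; lia.
Qed.

Lemma t_pos k : 0 < t k.
Proof. exact: tri_pos. Qed.

Lemma cube_exists n k : P k + 3 * t k <= n <= P k + size (F k) ->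
  per (t k) (n - 3 * t k) n.
Proof.
move=> /andP [H1 H2].
have H : per (t k) (P k) (P k + size (F k)).
  by apply/per_wper; rewrite occ_F; apply: wper_F.
by apply: (per_sub H); lia.
Qed.

Lemma new_char n l : 0 < l -> 3 * l <= n -> per l (n - 3 * l) n ->
  ((forall x, x + 3 * l <= n.-1 -> seg x (3 * l) <> seg (n - 3 * l) (3 * l)) <->
   exists k, l = t k /\ P k + 3 * l <= n <= P k + size (F k)).
Proof.
move=> Hl Hn Hper; split => [Hnew|[k [Hlk Hb]] x Hx Heq].
  have H0 : n - 3 * l + l <= n by lia.
  have [s [e [Hs He Hmr]]] := extend Hl Hper H0.
  have H3 : s + 3 * l <= e + 1 by lia.
  have [k [Hlk Hseg Hpk]] := classify Hl Hmr H3.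
  have HsF : e - s = size (F k) by rewrite -Hseg size_seg.
  exists k; split => //.
  case: (ltnP (P k) s) => Hc; last by apply/andP; split; lia.
  exfalso; apply: (Hnew (P k + (n - 3 * l - s))); first by lia.
  rewrite (@seg_sub _ (P k) (size (F k))); [|lia|lia].
  rewrite occ_F (@seg_sub (n - 3 * l) s (e - s)); [|lia|lia].
  by rewrite Hseg addKn.
case/andP: Hb => Hb1 Hb2.
have Hperx : per l x (x + 3 * l).
  have W : wper l (seg (n - 3 * l) (3 * l)) by apply/per_wper; rewrite subnK.
  by rewrite -Heq in W; apply/per_wper.
have H0 : x + l <= x + 3 * l by lia.
have [s [e [Hs He Hmr]]] := extend Hl Hperx H0.
have H3 : s + 3 * l <= e + 1 by lia.
have [k' [Hlk' Hseg Hpk]] := classify Hl Hmr H3.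
have Ekk : k' = k by apply: t_inj; rewrite -Hlk -Hlk'.
subst k'.
have HsF : e - s = size (F k) by rewrite -Hseg size_seg.
have E1 : seg x (3 * l) = take (3 * l) (drop (x - s) (F k)).
  by rewrite (@seg_sub x s (e - s)) ?Hseg //; lia.
have E2 : seg (n - 3 * l) (3 * l) = take (3 * l) (drop (n - 3 * l - P k) (F k)).
  by rewrite (@seg_sub (n - 3 * l) (P k) (size (F k))) ?occ_F //; lia.
have E3 : seg (P k + (x - s)) (3 * l) = take (3 * l) (drop (x - s) (F k)).
  by rewrite (@seg_sub (P k + (x - s)) (P k) (size (F k))) ?occ_F ?addKn //; lia.
set d := n - 3 * l - P k - (x - s).
have Ed : P k + (x - s) + d = n - 3 * l by rewrite /d; lia.
have Hseq : seg (P k + (x - s)) (3 * l) = seg (P k + (x - s) + d) (3 * l).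
  by rewrite Ed E3 -E1 Heq.
have Hperd := seg_eq_per Hseq.
have Hd0 : 0 < d by rewrite /d; lia.
have HFk := size_F k; have HSk := S_lt k.
have Hdl : d < l by rewrite /d; lia.
have H4 : P k + (x - s) + d <= P k + (x - s) + 3 * l + d by lia.
have [s2 [e2 [Hs2 He2 Hmr2]]] := extend Hd0 Hperd H4.
have H5 : s2 + 3 * d <= e2 + 1 by lia.
have [k2 [Hdk2 Hseg2 _]] := classify Hd0 Hmr2 H5.
have HsF2 : e2 - s2 = size (F k2) by rewrite -Hseg2 size_seg.
have := size_F k2; have := S_lt k2; lia.
Qed.

Lemma per_seg_eq y L d : per d y (y + L + d) -> seg y L = seg (y + d) L.
Proof.
move=> H; apply: (@eq_from_nth letter La); first by rewrite !size_seg.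
move=> i; rewrite size_seg => Hi.
rewrite (nth_seg y Hi) (nth_seg (y + d) Hi).
have -> : y + d + i = (y + i) + d by lia.
apply: H; lia.
Qed.



Lemma seg3 x l : seg x (3 * l) = seg x l ++ seg (x + l) l ++ seg (x + 2 * l) l.
Proof.
have E : 3 * l = l + (l + l) by lia.
rewrite E seg_add seg_add.
have E2 : x + l + l = x + 2 * l by lia.
by rewrite E2.
Qed.

Lemma seg2 x l : seg x (2 * l) = seg x l ++ seg (x + l) l.
Proof. have E : 2 * l = l + l by lia. by rewrite E seg_add. Qed.

Lemma cube_seg n l : 3 * l <= n ->
  (seg (n - 3 * l) (3 * l) = seg (n - l) l ++ seg (n - l) l ++ seg (n - l) l <->
   per l (n - 3 * l) n).
Proof.
move=> Hn.
have E1 : n - 3 * l + l = n - 2 * l by lia.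
have E2 : n - 3 * l + 2 * l = n - l by lia.
have E3 : n - 3 * l + 2 * l + l = n by lia.
rewrite seg3 E1 E2; split.
  move=> /eqP; rewrite eqseq_cat; last by rewrite !size_seg.
  move=> /andP [/eqP H1]; rewrite eqseq_cat; last by rewrite !size_seg.
  move=> /andP [/eqP H2 _].
  have H : seg (n - 3 * l) (2 * l) = seg (n - 3 * l + l) (2 * l).
    by rewrite !seg2 E1 (_ : n - 2 * l + l = n - l) ?H1 ?H2; last by lia.
  have := seg_eq_per H.
  by rewrite E3.
move=> H.
have Hp : per l (n - 3 * l) (n - 3 * l + 2 * l + l) by rewrite E3.
have := per_seg_eq Hp.
rewrite !seg2 E1.
have E4 : n - 2 * l + l = n - l by lia.
rewrite E4 => /eqP; rewrite eqseq_cat; last by rewrite !size_seg.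
move=> /andP [/eqP H1 /eqP H2].
by rewrite H1 H2.
Qed.

Lemma suffix_seg u n : suffix u (seg 0 n) <-> size u <= n /\ seg (n - size u) (size u) = u.
Proof.
split.
  move/suffixP => [s' Hs].
  have Hsz : n = size s' + size u by rewrite -(size_seg 0 n) Hs size_cat.
  split; first by lia.
  have H1 : 0 <= n - size u by [].
  have H2 : n - size u + size u <= 0 + n by lia.
  rewrite (seg_sub H1 H2) subn0 Hs.
  have E : n - size u = size s' by lia.
  by rewrite E drop_size_cat // take_size.
move=> [H1 H2]; apply/suffixP; exists (seg 0 (n - size u)).
have := seg_add 0 (n - size u) (size u).
by rewrite subnK // add0n H2.
Qed.

Lemma infix_seg u m : infix u (seg 0 m) <-> exists x, x + size u <= m /\ seg x (size u) = u.
Proof.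
split.
  move/infixP => [s [s' Hs]].
  have Hsz : m = size s + size u + size s' by rewrite -(size_seg 0 m) Hs !size_cat addnA.
  exists (size s); split; first by lia.
  have H1 : 0 <= size s by [].
  have H2 : size s + size u <= 0 + m by lia.
  rewrite (seg_sub H1 H2) subn0 Hs drop_size_cat //.
  by rewrite take_size_cat.
move=> [x [H1 H2]]; apply/infixP; exists (seg 0 x), (seg (x + size u) (m - (x + size u))).
have E1 := seg_add 0 x (size u + (m - (x + size u))).
have E2 := seg_add x (size u) (m - (x + size u)).
rewrite add0n in E1.
have E3 : x + (size u + (m - (x + size u))) = m by lia.
by rewrite E3 in E1; rewrite E1 E2 H2.
Qed.

Lemma new_cube_iff n l : 0 < l -> l <= n ->
  (new_cube n (seg (n - l) l) <-> exists k, l = t k /\ P k + 3 * l <= n <= P k + size (F k)).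
Proof.
move=> Hl Hln.
have Hw : size (seg (n - l) l) = l by rewrite size_seg.
have Hw3 : size (seg (n - l) l ++ seg (n - l) l ++ seg (n - l) l) = 3 * l.
  by rewrite !size_cat Hw; lia.
rewrite /new_cube !Tpref_seg; split.
  move=> /and3P [_ Hsuf Hinf].
  have [Hsz Hseg] := (suffix_seg _ _).1 Hsuf.
  rewrite Hw3 in Hsz Hseg.
  have Hper := (cube_seg Hsz).1 Hseg.
  apply/(new_char Hl Hsz Hper) => x Hx Heq.
  apply: (negP Hinf); apply/infix_seg; exists x; rewrite Hw3; split => //.
  by rewrite Heq Hseg.
move=> Hex.
have [k [Hlk /andP [Hb1 Hb2]]] := Hex.
have Hsz : 3 * l <= n by lia.
have Hper : per l (n - 3 * l) n.
  by rewrite Hlk; apply: cube_exists; rewrite -Hlk; apply/andP.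
have Hseg := (cube_seg Hsz).2 Hper.
have Hnew := (new_char Hl Hsz Hper).2 Hex.
apply/and3P; split.
- by rewrite Hw.
- by apply/suffix_seg; rewrite Hw3; split.
- apply/negP => /infix_seg [x [Hx Heq]]; rewrite Hw3 in Hx Heq.
  apply: (Hnew x); first by lia.
  by rewrite Heq Hseg.
Qed.

Lemma new_cube_shape n w : new_cube n w ->
  0 < size w <= n /\ w = seg (n - size w) (size w).
Proof.
move=> /and3P [H0 Hsuf _].
rewrite Tpref_seg in Hsuf.
have [Hsz Hseg] := (suffix_seg _ _).1 Hsuf.
have Hw3 : size (w ++ w ++ w) = 3 * size w by rewrite !size_cat; lia.
rewrite Hw3 in Hsz Hseg.
split; first by apply/andP; split => //; lia.
rewrite seg3 in Hseg.
move/eqP: Hseg; rewrite eqseq_cat; last by rewrite size_seg.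
move=> /andP [_]; rewrite eqseq_cat; last by rewrite size_seg.
move=> /andP [_ /eqP H].
have E : n - 3 * size w + 2 * size w = n - size w by lia.
by rewrite E in H.
Qed.

Lemma c_count n : c n = count (fun l => new_cube n (seg (n - l) l)) (iota 1 n).
Proof.
rewrite /c -(count_map (fun l => seg (n - l) l) (new_cube n)).
rewrite -!size_filter; apply: perm_size.
apply: uniq_perm.
- by apply: filter_uniq; apply: undup_uniq.
- apply: filter_uniq; rewrite map_inj_in_uniq ?iota_uniq //.
  move=> a b _ _ /(congr1 size); rewrite !size_seg.
  done.
move=> w; rewrite !mem_filter.
case Hn: (new_cube n w); last by [].
rewrite !andTb.
have [/andP [Hs0 Hsn] Ew] := new_cube_shape Hn.
rewrite mem_undup.
have -> : w \in [seq seg (n - l) l | l <- iota 1 n].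
  rewrite Ew; apply: map_f; rewrite mem_iota; lia.
rewrite Tpref_seg; apply/allpairsP; exists (n - size w, size w).
rewrite [(_, _).1]/= [(_, _).2]/=.
move: Hsn Hs0; set m := size w => Hsn Hs0.
split.
- rewrite mem_iota size_seg; lia.
- rewrite mem_iota size_seg; lia.
- have H1 : 0 <= n - size w by [].
  have H2 : n - size w + size w <= 0 + n by lia.
  by rewrite {1}Ew (seg_sub H1 H2) subn0.
Qed.

Definition inI n k := P k + 3 * t k <= n <= P k + size (F k).

Lemma c_one n k0 : inI n k0 -> (forall k, inI n k -> k = k0) -> c n = 1.
Proof.
move=> Hb Huniq; rewrite c_count.
have Hbb := Hb; case/andP: Hbb => Hb1 Hb2.
rewrite (@eq_in_count _ _ (pred1 (t k0))).
  have Hin : t k0 \in iota 1 n by rewrite mem_iota; have := t_pos k0; lia.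
  by rewrite count_uniq_mem ?iota_uniq // Hin.
move=> l; rewrite mem_iota => /andP [H1 H2].
have Hl0 : 0 < l by lia.
have Hln : l <= n by lia.
change (new_cube n (seg (n - l) l) = (l == t k0)).
apply/idP/eqP.
  move=> /(new_cube_iff Hl0 Hln) [k [Hlk Hk]].
  rewrite Hlk in Hk *; by rewrite (Huniq k Hk).
move=> Hl; apply/(new_cube_iff Hl0 Hln); exists k0; split => //.
by rewrite Hl.
Qed.

Lemma c_zero n : (forall k, ~ inI n k) -> c n = 0.
Proof.
move=> H; rewrite c_count (@eq_in_count _ _ pred0) ?count_pred0 //.
move=> l; rewrite mem_iota => /andP [H1 H2].
have Hl0 : 0 < l by lia.
have Hln : l <= n by lia.
change (new_cube n (seg (n - l) l) = false).
apply/negP => /(new_cube_iff Hl0 Hln) [k [Hlk Hk]].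
by apply: (H k); rewrite /inI -Hlk.
Qed.


Lemma S_closed k : tri k.+4 = tri k.+2 + 2 * S k + 3.
Proof.
elim: k => [|k IH]; first by [].
have E1 := triS k.+2.
have E2 : S k.+1 = S k + tri k.+2 by [].
lia.
Qed.

Lemma kernS m : kern m.+3 = kern m.+2 + kern m.+1 + kern m - 1.
Proof. by []. Qed.

Lemma kern_rel k : tri k.+2 + S k + 2 = kern (k + 5).
Proof.
have H : forall k, [/\ tri k.+2 + S k + 2 = kern (k + 5),
   tri k.+3 + S k.+1 + 2 = kern (k.+1 + 5) & tri k.+4 + S k.+2 + 2 = kern (k.+2 + 5)].
  elim=> [|j [H0 H1 H2]]; first by split.
  split => //.
  have E : j.+3 + 5 = (j + 5).+3 by lia.
  have E1 : j.+2 + 5 = (j + 5).+2 by lia.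
  have E2 : j.+1 + 5 = (j + 5).+1 by lia.
  rewrite E kernS -E1 -E2 -H0 -H1 -H2.
  have F1 := triS j.+2.
  have F2 : S j.+1 = S j + tri j.+2 by [].
  have F3 : S j.+2 = S j.+1 + tri j.+3 by [].
  have F4 : S j.+3 = S j.+2 + tri j.+4 by [].
  have := S_closed j; lia.
by case: (H k).
Qed.

Lemma tri_mono a b : a <= b -> tri a <= tri b.
Proof.
move=> /subnK <-; elim: (b - a) => [|d IH] //.
by rewrite addSn; apply: (leq_trans IH); apply: tri_le.
Qed.

Definition Lb m := tri (m + 1) + 2 * tri (m - 2).

Lemma Lb_eq j : Lb (j + 2) = tri j.+3 + 2 * tri j.
Proof.
rewrite /Lb.
have E1 : j + 2 + 1 = j.+3 by lia.
have E2 : j + 2 - 2 = j by lia.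
by rewrite E1 E2.
Qed.

Lemma Lb_S m : Lb m.+1 = tri (m + 2) + 2 * tri (m - 1).
Proof.
rewrite /Lb.
have E1 : m.+1 + 1 = m + 2 by lia.
have E2 : m.+1 - 2 = m - 1 by lia.
by rewrite E1 E2.
Qed.

Lemma Lb_lt m : 2 <= m -> Lb m < Lb m.+1.
Proof.
move=> /subnK <-; set j := m - 2.
have E : (j + 2).+1 = j.+1 + 2 by lia.
rewrite E !Lb_eq.
have := triS j.+1; have := tri_pos j; have := tri_le j; lia.
Qed.

Lemma Lb_mono a b : 2 <= a -> a <= b -> Lb a <= Lb b.
Proof.
move=> Ha /subnK <-; elim: (b - a) => [|d IH] //.
rewrite addSn; apply: (leq_trans IH); apply: ltnW; apply: Lb_lt; lia.
Qed.

Lemma band_unique n m m' : 2 <= m -> 2 <= m' -> Lb m <= n < Lb m.+1 ->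
  Lb m' <= n < Lb m'.+1 -> m = m'.
Proof.
move=> Hm Hm' /andP [H1 H2] /andP [H3 H4].
case: (ltngtP m m') => // Hc.
- have := Lb_mono (_ : 2 <= m.+1) Hc; lia.
- have := Lb_mono (_ : 2 <= m'.+1) Hc; lia.
Qed.


Lemma inI_low k : P k + 3 * t k = Lb (k + 4).
Proof.
have E : k + 4 = k.+2 + 2 by lia.
rewrite E Lb_eq /P /t.
have := triS k.+2; lia.
Qed.

Lemma inI_up k : P k + size (F k) + 2 = tri (k + 4 + 1) + kern (k + 4 + 1).
Proof.
have E : k + 4 + 1 = k + 5 by lia.
rewrite E -kern_rel size_F /P /t.
have E2 : k + 5 = (k.+4).+1 by lia.
rewrite E2; have := triS k.+2; lia.
Qed.

Lemma inI_band n k : inI n k -> Lb (k + 4) <= n < Lb (k + 4).+1.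
Proof.
move=> /andP [H1 H2]; rewrite -inI_low H1 /=.
have E : (k + 4).+1 = k.+3 + 2 by lia.
rewrite E Lb_eq.
have := size_F k; have := S_lt k; have := triS k.+3; have := triS k.+2.
have := tri_le k.+2; rewrite /P /t in H2 *; lia.
Qed.

Lemma band_exists n : 2 <= n -> exists m, 2 <= m /\ Lb m <= n < Lb m.+1.
Proof.
elim: n => [|n IH] Hn //.
case: (ltnP n 2) => Hn2.
  have -> : n.+1 = 2 by lia.
  by exists 2.
have [m [Hm /andP [H1 H2]]] := IH Hn2.
case: (ltnP n.+1 (Lb m.+1)) => Hc.
  by exists m; split => //; apply/andP; split; lia.
exists m.+1; split; first by lia.
have := Lb_lt (_ : 2 <= m.+1); lia.
Qed.

Theorem mainTheorem5 :
  (forall n : nat, 1 <= n <= 57 -> c n = 0) /\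
  (forall n : nat, 58 <= n ->
     (exists m : nat, 2 <= m /\
        tri (m + 1) + 2 * tri (m - 2) <= n < tri (m + 2) + 2 * tri (m - 1)) /\
     (forall m : nat, 2 <= m ->
        tri (m + 1) + 2 * tri (m - 2) <= n < tri (m + 2) + 2 * tri (m - 1) ->
        7 <= m /\ (c n = 1 <-> n + 2 <= tri (m + 1) + kern (m + 1)))).
Proof.
split.
  move=> n /andP [Hn1 Hn57]; apply: c_zero => k Hk.
  case: (ltnP k 3) => Hk3.
    move: Hk; rewrite /inI size_F => /andP [H1 H2].
    have : S k < t k by case: k Hk3 {H1 H2} => [|[|[|k]]].
    lia.
  move: Hk => /andP [H1 _]; rewrite inI_low in H1.
  have Ha : 2 <= 7 by [].
  have Hb : 7 <= k + 4 by lia.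
  have := Lb_mono Ha Hb.
  have -> : Lb 7 = 58 by [].
  lia.
move=> n Hn; split.
  have Hn2 : 2 <= n by lia.
  have [m [Hm Hb]] := band_exists Hn2.
  by exists m; split => //; rewrite -Lb_S.
move=> m Hm2; rewrite -Lb_S -/(Lb m) => Hband.
have Hm7 : 7 <= m.
  case: (ltnP m 7) => // Hc.
  have Ha : 2 <= m.+1 by lia.
  have Hb : m.+1 <= 7 by lia.
  have := Lb_mono Ha Hb.
  have -> : Lb 7 = 58 by [].
  lia.
split => //.
set k0 := m - 4.
have Em : m = k0 + 4 by rewrite /k0; lia.
have Hu := inI_up k0; rewrite -Em in Hu.
have Hl := inI_low k0; rewrite -Em in Hl.
have Huniq : forall k, inI n k -> k = k0.
  move=> k Hk; have Hb := inI_band Hk.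
  have Hk4 : 2 <= k + 4 by lia.
  have := band_unique Hk4 Hm2 Hb Hband.
  lia.
split.
  move=> Hc; case: (leqP (n + 2) (tri (m + 1) + kern (m + 1))) => // Hgt.
  have H0 : c n = 0.
    apply: c_zero => k Hk; have Ek := Huniq k Hk; subst k.
    move: Hk => /andP [_ H2]; lia.
  by rewrite H0 in Hc.
move=> Hle; apply: (@c_one n k0) => //.
rewrite /inI Hl; apply/andP; split; lia.
Qed.
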